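(* Let $\mathcal H$ be a finite-dimensional Hilbert space, $H(t_i)=\sum_l E^i_l\Pi^i_l$, $H(t_f)=\sum_k E^f_k\Pi^f_k$ Hermitian with spectral projectors, $\beta>0$, $\gamma_{\beta,i}=e^{-\beta H(t_i)}/\mathcal Z_{\beta,i}$, $\gamma_{\beta,f}=e^{-\beta H(t_f)}/\mathcal Z_{\beta,f}$, $\Delta F=-\beta^{-1}\ln(\mathcal Z_{\beta,f}/\mathcal Z_{\beta,i})$. Let $\Phi[X]=\sum_\alpha A_\alpha XA_\alpha^\dagger$ be a CPTP map with a full-rank fixed point $\pi=\Phi[\pi]$, and let $\tilde\Phi[X]=\sum_\alpha\tilde A_\alpha X\tilde A_\alpha^\dagger$ with $\tilde A_\alpha=\pi^{1/2}A_\alpha^\dagger\pi^{-1/2}$. Let the forward and backward initial states be decomposed as $$\rho_i=(1-a)\gamma_{\beta,i}+a(1-c)\tau_d+ac\,\tau_c,\qquad \tilde\rho_i=(1-\tilde a)\gamma_{\beta,f}+\tilde a(1-\tilde c)\tilde\tau_d+\tilde a\tilde c\,\tilde\tau_c,$$ where $a,\tau$ (resp. $\tilde a,\tilde\tau$) are the weight of athermality and minimal athermal state of $\rho_i$ w.r.t. $\gamma_{\beta,i}$ (resp. of $\tilde\rho_i$ w.r.t. $\gamma_{\beta,f}$), and $\tau=(1-c)\tau_d+c\tau_c$ (resp. $\tilde\tau=(1-\tilde c)\tilde\tau_d+\tilde c\tilde\tau_c$) is the weight-of-coherence decomposition w.r.t. the eigenbasis of $H(t_i)$ (resp. $H(t_f)$).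 For an operator $\mathcal A$ set $p^i_l(\mathcal A)=\mathrm{Tr}(\mathcal A\Pi^i_l)$, $p^f_k(\mathcal A)=\mathrm{Tr}(\Phi[\mathcal A]\Pi^f_k)$, $\tilde p^i_k(\mathcal A)=\mathrm{Tr}(\mathcal A\Pi^f_k)$, $\tilde p^f_l(\mathcal A)=\mathrm{Tr}(\tilde\Phi[\mathcal A]\Pi^i_l)$, and $P_\Gamma(l,k)=p^i_l(\rho_i)p^f_k(\rho_i)$, $P_{\tilde\Gamma}(k,l)=\tilde p^i_k(\tilde\rho_i)\tilde p^f_l(\tilde\rho_i)$. Define $\Theta^{(i)}_l=\ln\!\big((1-a)+a(1-c)\tfrac{p^i_l(\tau_d)}{p^i_l(\gamma_{\beta,i})}\big)$, $\Sigma^{(i)}_l=\ln\!\big(1+\tfrac{ac\,p^i_l(\tau_c)}{(1-a)p^i_l(\gamma_{\beta,i})+a(1-c)p^i_l(\tau_d)}\big)$, and $\Theta^{(f)}_k,\Sigma^{(f)}_k$ by the same formulas with $p^i_l$ replaced by $p^f_k$; define $\tilde\Theta^{(i)}_k,\tilde\Sigma^{(i)}_k$ (resp. $\tilde\Theta^{(f)}_l,\tilde\Sigma^{(f)}_l$) by the same formulas with $(a,c,\tau_d,\tau_c,\gamma_{\beta,i})$ replaced by $(\tilde a,\tilde c,\tilde\tau_d,\tilde\tau_c,\gamma_{\beta,f})$ and $p^i_l$ replaced by $\tilde p^i_k$ (resp. $\tilde p^f_l$). Let $\Delta\sigma_{l,k}=\ln p^f_k(\gamma_{\beta,i})-\ln\tilde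 p^f_l(\gamma_{\beta,f})$, $\Delta\Theta_{l,k}=\Theta^{(i)}_l+\Theta^{(f)}_k-\tilde\Theta^{(i)}_k-\tilde\Theta^{(f)}_l$, $\Delta\Sigma_{l,k}=\Sigma^{(i)}_l+\Sigma^{(f)}_k-\tilde\Sigma^{(i)}_k-\tilde\Sigma^{(f)}_l$. Then, for every $(l,k)$ for which these quantities are well defined, $$\Delta s^{l,k}_{\rm tot}:=\ln\frac{P_\Gamma(l,k)}{P_{\tilde\Gamma}(k,l)}=\beta(\Delta E_{l,k}-\Delta F)+\Delta\sigma_{l,k}+\Delta\Theta_{l,k}+\Delta\Sigma_{l,k},\qquad \Delta E_{l,k}=E^f_k-E^i_l.$$
   Context: Weight of athermality: $A_w(\rho)=\min_{\tau\in\mathscr D(\mathcal H)}\{a\ge0:\rho=(1-a)\gamma+a\tau\}$ for a full-rank thermal reference state $\gamma$, with minimal athermal state $\tau$ the optimizer. Weight of coherence w.r.t. a basis: $C_w(\tau)=\min\{c\ge0:\tau=(1-c)\tau_d+c\tau_c,\ \tau_d\text{ diagonal in the basis},\ \tau_c\in\mathscr D(\mathcal H)\}$. Here $\Pi^i_l$ ($\Pi^f_k$) are the spectral projectors of $H(t_i)$ ($H(t_f)$), used in the eigenbasis-related statements as projectors onto eigenvectors. *)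

(* Defs.v *)
From HB Require Import structures.
From mathcomp Require Import all_boot all_order all_algebra.
From mathcomp Require Import complex.
From mathcomp Require Import reals sequences exp.
Set Implicit Arguments. Unset Strict Implicit. Unset Printing Implicit Defensive.
Import Order.TTheory GRing.Theory Num.Theory.
Local Open Scope ring_scope.
Local Open Scope complex_scope.

Section QDefs.
Variable R : realType.
Local Notation C := R[i].
Variable n : nat.

Definition adjmx (p q : nat) (A : 'M[C]_(p, q)) : 'M[C]_(q, p) :=
  (map_mx (fun z => z^*) A)^T.

Definition hermitian (A : 'M[C]_n) : Prop := adjmx A = A.

Definition psd (A : 'M[C]_n) : Prop :=
  hermitian A /\ forall x : 'cV[C]_n, 0 <= (adjmx x *m A *m x) 0 0.
Definition posdef (A : 'M[C]_n) : Prop :=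
  hermitian A /\ forall x : 'cV[C]_n, x != 0 -> 0 < (adjmx x *m A *m x) 0 0.

Definition density (A : 'M[C]_n) : Prop := psd A /\ \tr A = 1.

Definition unitary (U : 'M[C]_n) : Prop := adjmx U *m U = 1%:M.

(* A Hermitian operator given by its spectral decomposition: orthonormal
   eigenbasis = columns of the unitary U, eigenvalues E.
   spec_fun U E f = f(H) = sum_l f(E l) Pi_l. *)
Definition spec_fun (U : 'M[C]_n) (E : 'I_n -> R) (f : R -> R) : 'M[C]_n :=
  U *m diag_mx (\row_l (f (E l))%:C) *m adjmx U.

Definition hamiltonian U E := spec_fun U E id.

Definition eproj (U : 'M[C]_n) (l : 'I_n) : 'M[C]_n :=
  col l U *m adjmx (col l U).

Definition partZ (beta : R) U E : R :=
  complex.Re (\tr (spec_fun U E (fun e => expR (- beta * e)))).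
Definition gibbs (beta : R) U E : 'M[C]_n :=
  ((partZ beta U E)^-1)%:C *: spec_fun U E (fun e => expR (- beta * e)).

Definition freeDiff (beta : R) Ui Ei Uf Ef : R :=
  - beta^-1 * ln (partZ beta Uf Ef / partZ beta Ui Ei).

Definition kraus (m : nat) (A : 'I_m -> 'M[C]_n) (X : 'M[C]_n) : 'M[C]_n :=
  \sum_(a < m) (A a *m X *m adjmx (A a)).

Definition trace_preserving (m : nat) (A : 'I_m -> 'M[C]_n) : Prop :=
  \sum_(a < m) (adjmx (A a) *m A a) = 1%:M.

Definition is_psd_sqrt (S P : 'M[C]_n) : Prop := psd S /\ S *m S = P.

(* Petz-recovery (time-reversed) Kraus operators pi^{1/2} A^dag pi^{-1/2},
   where S = pi^{1/2} *)
Definition petz_kraus (m : nat) (S : 'M[C]_n) (A : 'I_m -> 'M[C]_n) :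
  'I_m -> 'M[C]_n := fun a => S *m adjmx (A a) *m invmx S.

(* Tr(X P) (real part; it is real for the Hermitian X used here) *)
Definition ptr (X P : 'M[C]_n) : R := complex.Re (\tr (X *m P)).

Definition mix (a : R) (X Y : 'M[C]_n) : 'M[C]_n :=
  (1 - a)%:C *: X + a%:C *: Y.

Definition weight_athermality (gamma rho : 'M[C]_n) (a : R) (tau : 'M[C]_n)
  : Prop :=
  [/\ 0 <= a, density tau, rho = mix a gamma tau &
      forall (a' : R) (tau' : 'M[C]_n),
        0 <= a' -> density tau' -> rho = mix a' gamma tau' -> a <= a'].

Definition diag_in (U X : 'M[C]_n) : bool := is_diag_mx (adjmx U *m X *m U).

Definition weight_coherence (U tau : 'M[C]_n) (c : R) (taud tauc : 'M[C]_n)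
  : Prop :=
  [/\ 0 <= c, density taud /\ diag_in U taud, density tauc,
      tau = mix c taud tauc &
      forall (c' : R) (taud' tauc' : 'M[C]_n),
        0 <= c' -> density taud' -> diag_in U taud' -> density tauc' ->
        tau = mix c' taud' tauc' -> c <= c'].

End QDefs.

(* Theta and Sigma, given a, c and the probabilities
   pg = p(gamma), pd = p(tau_d), pc = p(tau_c) *)
Section ThetaSigma.
Variable R : realType.
Local Open Scope ring_scope.
Definition theta_arg (a c pg pd : R) : R := (1 - a) + a * (1 - c) * (pd / pg).
Definition Theta (a c pg pd : R) : R := ln (theta_arg a c pg pd).
Definition sigma_den (a c pg pd : R) : R := (1 - a) * pg + a * (1 - c) * pd.
Definition sigma_arg (a c pg pd pc : R) : R :=
  1 + a * c * pc / sigma_den a c pg pd.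
Definition Sigma (a c pg pd pc : R) : R := ln (sigma_arg a c pg pd pc).
End ThetaSigma.

Section Probs.
Variable R : realType.
Variable n : nat.
Local Open Scope ring_scope.
Definition pI (U : 'M[R[i]]_n) (l : 'I_n) (X : 'M[R[i]]_n) : R :=
  ptr X (eproj U l).
Definition pF (m : nat) (A : 'I_m -> 'M[R[i]]_n) (U : 'M[R[i]]_n) (k : 'I_n)
  (X : 'M[R[i]]_n) : R := ptr (kraus A X) (eproj U k).
End Probs.

(* Main.v *)
Require Import Defs.
From HB Require Import structures.
From mathcomp Require Import all_boot all_order all_algebra.
From mathcomp Require Import complex.
From mathcomp Require Import reals sequences exp.
From mathcomp Require Import lra ring.
Import Order.TTheory GRing.Theory Num.Theory.
Local Open Scope ring_scope.
Local Open Scope complex_scope.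

Section H.
Variable R : realType.
Variable n : nat.
Implicit Types X Y P : 'M[R[i]]_n.

Lemma Re_add (x y : R[i]) : complex.Re (x + y) = complex.Re x + complex.Re y.
Proof. by case: x => ? ?; case: y. Qed.

Lemma Re_scale (r : R) (x : R[i]) : complex.Re (r%:C * x) = r * complex.Re x.
Proof. case: x => x1 x2 /=. ring. Qed.

Lemma ptr_scale (r : R) X P : ptr (r%:C *: X) P = r * ptr X P.
Proof. by rewrite /ptr -scalemxAl mxtraceZ Re_scale. Qed.

Lemma ptr_add X Y P : ptr (X + Y) P = ptr X P + ptr Y P.
Proof. by rewrite /ptr mulmxDl mxtraceD Re_add. Qed.

Lemma ptr_mix (a : R) X Y P :
  ptr (mix a X Y) P = (1 - a) * ptr X P + a * ptr Y P.
Proof. by rewrite /mix ptr_add !ptr_scale. Qed.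

Lemma kraus_mix m (A : 'I_m -> 'M[R[i]]_n) (a : R) X Y :
  kraus A (mix a X Y) = mix a (kraus A X) (kraus A Y).
Proof.
rewrite /kraus /mix !scaler_sumr -big_split; apply: eq_bigr => j _.
by rewrite mulmxDr !mulmxDl -!scalemxAr -!scalemxAl.
Qed.

Lemma pI_mix2 (U : 'M[R[i]]_n) l (a c : R) g td tc :
  pI U l (mix a g (mix c td tc)) = (1-a) * pI U l g + a * ((1-c) * pI U l td + c * pI U l tc).
Proof. by rewrite /pI !ptr_mix. Qed.

Lemma pF_mix2 m (A : 'I_m -> 'M[R[i]]_n) (U : 'M[R[i]]_n) l (a c : R) g td tc :
  pF A U l (mix a g (mix c td tc)) = (1-a) * pF A U l g + a * ((1-c) * pF A U l td + c * pF A U l tc).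
Proof. by rewrite /pF !kraus_mix !ptr_mix. Qed.

Lemma Re_sum (F : 'I_n -> R[i]) : complex.Re (\sum_j F j) = \sum_j complex.Re (F j).
Proof.
apply: (big_ind2 (fun (z : R[i]) (r : R) => complex.Re z = r)) => //.
by move=> x1 x2 y1 y2 <- <-; rewrite Re_add.
Qed.

Lemma adj_col (U : 'M[R[i]]_n) l : adjmx (col l U) = row l (adjmx U).
Proof. by apply/matrixP => i j; rewrite !mxE. Qed.

Lemma col_mul' p q r (A : 'M[R[i]]_(p,q)) (B : 'M[R[i]]_(q,r)) j :
  A *m col j B = col j (A *m B).
Proof. by apply/matrixP=> i k; rewrite !mxE; apply: eq_bigr => h _; rewrite !mxE. Qed.

Lemma ptr_spec (U : 'M[R[i]]_n) (E : 'I_n -> R) (f : R -> R) l : unitary U ->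
  ptr (spec_fun U E f) (eproj U l) = f (E l).
Proof.
move=> hU; rewrite /ptr /spec_fun /eproj mulmxA mxtrace_mulC.
rewrite !mulmxA adj_col -row_mul hU -!mulmxA col_mul' hU.

rewrite col_mul' mulmx1 -row_mul mul1mx /mxtrace big_ord1 !mxE eqxx mulr1n. by []. Qed.

Lemma partZ_sum (beta : R) (U : 'M[R[i]]_n) (E : 'I_n -> R) : unitary U ->
  partZ beta U E = \sum_j expR (- beta * E j).
Proof.
move=> hU; rewrite /partZ /spec_fun mxtrace_mulC mulmxA hU mul1mx /mxtrace Re_sum.
by apply: eq_bigr => j _; rewrite !mxE eqxx mulr1n.
Qed.

Lemma partZ_gt0 (beta : R) (U : 'M[R[i]]_n) (E : 'I_n -> R) (l : 'I_n) :
  unitary U -> 0 < partZ beta U E.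
Proof.
move=> hU; rewrite partZ_sum // (bigD1 l) //=.
have h1 := expR_gt0 (- beta * E l).
have h2 : 0 <= \sum_(j | j != l) expR (- beta * E j).
  by apply: sumr_ge0 => j _; apply: ltW; apply: expR_gt0.
lra.
Qed.

Lemma gibbs_prob (beta : R) (U : 'M[R[i]]_n) (E : 'I_n -> R) (l : 'I_n) :
  unitary U -> pI U l (gibbs beta U E) = (partZ beta U E)^-1 * expR (- beta * E l).
Proof. by move=> hU; rewrite /pI /gibbs ptr_scale ptr_spec. Qed.

Lemma ln_gibbs_prob (beta : R) (U : 'M[R[i]]_n) (E : 'I_n -> R) (l : 'I_n) :
  unitary U -> 0 < pI U l (gibbs beta U E) /\
  ln (pI U l (gibbs beta U E)) = - ln (partZ beta U E) - beta * E l.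
Proof.
move=> hU; rewrite gibbs_prob //; have hZ := @partZ_gt0 beta U E l hU.
have hZ' : 0 < (partZ beta U E)^-1 by rewrite invr_gt0.
split; first by rewrite mulr_gt0 // expR_gt0.
rewrite lnM ?posrE ?expR_gt0 // lnV ?posrE // expRK; lra.
Qed.

End H.

Lemma fin {R : realType} {G A1 A2 A3 A4 g1 g3 pf ptf T1 T2 T3 T4 S1 S2 S3 S4 zi zf ei ef B : R} :
 G = A1 + A2 - A3 - A4 -> A1 = g1 + T1 + S1 -> A2 = pf + T2 + S2 ->
 A3 = g3 + T3 + S3 -> A4 = ptf + T4 + S4 -> g1 = -zi - ei -> g3 = -zf - ef ->
 B = ef - ei + zf - zi ->
 G = B + (pf - ptf) + (T1 + T2 - T3 - T4) + (S1 + S2 - S3 - S4).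
Proof. move=> -> -> -> -> -> -> -> ->; lra. Qed.

Lemma ln4 (R : realType) (x1 x2 x3 x4 : R) : 0 < x1 -> 0 < x2 -> 0 < x3 -> 0 < x4 ->
  ln (x1 * x2 / (x3 * x4)) = ln x1 + ln x2 - ln x3 - ln x4.
Proof.
move=> h1 h2 h3 h4.
rewrite ln_div ?posrE ?mulr_gt0 // !lnM ?posrE //; lra.
Qed.

Lemma dF_eq (R : realType) (beta x y lZi lZf : R) : 0 < beta ->
  beta * (y - x - - beta^-1 * (lZf - lZi)) = beta * y - beta * x + lZf - lZi.
Proof. move=> hb; field; by rewrite gt_eqF. Qed.

Lemma dF_eq2 (R : realType) (beta x y Zi Zf : R) : 0 < beta -> 0 < Zi -> 0 < Zf ->
  beta * (y - x - - beta^-1 * ln (Zf / Zi)) = beta * y - beta * x + ln Zf - ln Zi.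
Proof. by move=> hb hi hf; rewrite ln_div ?posrE // dF_eq. Qed.

Lemma decomp (R : realType) (a c pg pd pc : R) : 0 < pg ->
  0 < theta_arg a c pg pd -> sigma_den a c pg pd != 0 ->
  0 < sigma_arg a c pg pd pc ->
  0 < (1-a) * pg + a * ((1-c) * pd + c * pc) /\
  ln ((1-a) * pg + a * ((1-c) * pd + c * pc)) = ln pg + Theta a c pg pd + Sigma a c pg pd pc.
Proof.
move=> hg ht hs hsa.
have e : (1-a) * pg + a * ((1-c) * pd + c * pc) = pg * theta_arg a c pg pd * sigma_arg a c pg pd pc.
  move: hs; rewrite /theta_arg /sigma_arg /sigma_den => hs.
  by field; rewrite hs (gt_eqF hg).
have hpt : 0 < pg * theta_arg a c pg pd by rewrite mulr_gt0.
rewrite e; split; first by rewrite mulr_gt0.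
by rewrite !lnM ?posrE.
Qed.


Theorem mainTheorem4 (R : realType) (n m : nat) (beta : R)
  (Ui Uf : 'M[R[i]]_n) (Ei Ef : 'I_n -> R)
  (A : 'I_m -> 'M[R[i]]_n) (pi S : 'M[R[i]]_n)
  (rho rhot : 'M[R[i]]_n)
  (a c : R) (tau taud tauc : 'M[R[i]]_n)
  (aT cT : R) (taut taudt tauct : 'M[R[i]]_n)
  (l k : 'I_n) :
  0 < beta ->
  unitary Ui -> unitary Uf ->
  trace_preserving A ->
  density pi -> posdef pi -> kraus A pi = pi -> is_psd_sqrt S pi ->
  density rho -> density rhot ->
  weight_athermality (gibbs beta Ui Ei) rho a tau ->
  weight_coherence Ui tau c taud tauc ->
  weight_athermality (gibbs beta Uf Ef) rhot aT taut ->
  weight_coherence Uf taut cT taudt tauct ->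
  let gi := gibbs beta Ui Ei in
  let gf := gibbs beta Uf Ef in
  let At := petz_kraus S A in
  (* p^i_l, p^f_k, ~p^i_k, ~p^f_l *)
  let p_i := pI Ui l in
  let p_f := pF A Uf k in
  let pt_i := pI Uf k in
  let pt_f := pF At Ui l in
  let PG := p_i rho * p_f rho in
  let PGt := pt_i rhot * pt_f rhot in
  (* well-definedness of all quantities for this (l, k) *)
  0 < p_f gi -> 0 < pt_f gf ->
  0 < theta_arg a c (p_i gi) (p_i taud) ->
  0 < theta_arg a c (p_f gi) (p_f taud) ->
  0 < theta_arg aT cT (pt_i gf) (pt_i taudt) ->
  0 < theta_arg aT cT (pt_f gf) (pt_f taudt) ->
  sigma_den a c (p_i gi) (p_i taud) != 0 ->
  sigma_den a c (p_f gi) (p_f taud) != 0 ->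
  sigma_den aT cT (pt_i gf) (pt_i taudt) != 0 ->
  sigma_den aT cT (pt_f gf) (pt_f taudt) != 0 ->
  0 < sigma_arg a c (p_i gi) (p_i taud) (p_i tauc) ->
  0 < sigma_arg a c (p_f gi) (p_f taud) (p_f tauc) ->
  0 < sigma_arg aT cT (pt_i gf) (pt_i taudt) (pt_i tauct) ->
  0 < sigma_arg aT cT (pt_f gf) (pt_f taudt) (pt_f tauct) ->
  PGt != 0 -> 0 < PG / PGt ->
  let dE := Ef k - Ei l in
  let dF := freeDiff beta Ui Ei Uf Ef in
  let dsigma := ln (p_f gi) - ln (pt_f gf) in
  let dTheta := Theta a c (p_i gi) (p_i taud) + Theta a c (p_f gi) (p_f taud)
              - Theta aT cT (pt_i gf) (pt_i taudt)
              - Theta aT cT (pt_f gf) (pt_f taudt) in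
  let dSigma := Sigma a c (p_i gi) (p_i taud) (p_i tauc)
              + Sigma a c (p_f gi) (p_f taud) (p_f tauc)
              - Sigma aT cT (pt_i gf) (pt_i taudt) (pt_i tauct)
              - Sigma aT cT (pt_f gf) (pt_f taudt) (pt_f tauct) in
  ln (PG / PGt) = beta * (dE - dF) + dsigma + dTheta + dSigma.

Proof.
move=> hb hUi hUf _ _ _ _ _ _ _ [ha _ erho _] [hc _ _ etau _] [haT _ erhot _] [hcT _ _ etaut _].
move=> gi gf At p_i p_f pt_i pt_f PG PGt hpf hptf ht1 ht2 ht3 ht4 hs1 hs2 hs3 hs4 hsa1 hsa2 hsa3 hsa4 hPGt hPG dE dF dsigma dTheta dSigma.
have E1 : p_i rho = (1-a) * p_i gi + a * ((1-c) * p_i taud + c * p_i tauc).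
by rewrite erho etau; apply: pI_mix2.
have E2 : p_f rho = (1-a) * p_f gi + a * ((1-c) * p_f taud + c * p_f tauc).
by rewrite erho etau; apply: pF_mix2.
have E3 : pt_i rhot = (1-aT) * pt_i gf + aT * ((1-cT) * pt_i taudt + cT * pt_i tauct).
by rewrite erhot etaut; apply: pI_mix2.
have E4 : pt_f rhot = (1-aT) * pt_f gf + aT * ((1-cT) * pt_f taudt + cT * pt_f tauct).
by rewrite erhot etaut; apply: pF_mix2.
have [hgi Lgi] : 0 < p_i gi /\ ln (p_i gi) = - ln (partZ beta Ui Ei) - beta * Ei l := @ln_gibbs_prob _ _ beta Ui Ei l hUi.
have [hgf Lgf] : 0 < pt_i gf /\ ln (pt_i gf) = - ln (partZ beta Uf Ef) - beta * Ef k := @ln_gibbs_prob _ _ beta Uf Ef k hUf.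
have [P1 L1] := @decomp _ _ _ _ _ _ hgi ht1 hs1 hsa1.
have [P2 L2] := @decomp _ _ _ _ _ _ hpf ht2 hs2 hsa2.
have [P3 L3] := @decomp _ _ _ _ _ _ hgf ht3 hs3 hsa3.
have [P4 L4] := @decomp _ _ _ _ _ _ hptf ht4 hs4 hsa4.
have Q1 : 0 < p_i rho by rewrite E1.
have Q2 : 0 < p_f rho by rewrite E2.
have Q3 : 0 < pt_i rhot by rewrite E3.
have Q4 : 0 < pt_f rhot by rewrite E4.
have M1 : ln (p_i rho) = ln (p_i gi) + Theta a c (p_i gi) (p_i taud) + Sigma a c (p_i gi) (p_i taud) (p_i tauc) by rewrite E1.
have M2 : ln (p_f rho) = ln (p_f gi) + Theta a c (p_f gi) (p_f taud) + Sigma a c (p_f gi) (p_f taud) (p_f tauc) by rewrite E2.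
have M3 : ln (pt_i rhot) = ln (pt_i gf) + Theta aT cT (pt_i gf) (pt_i taudt) + Sigma aT cT (pt_i gf) (pt_i taudt) (pt_i tauct) by rewrite E3.
have M4 : ln (pt_f rhot) = ln (pt_f gf) + Theta aT cT (pt_f gf) (pt_f taudt) + Sigma aT cT (pt_f gf) (pt_f taudt) (pt_f tauct) by rewrite E4.
have K : ln (PG / PGt) = ln (p_i rho) + ln (p_f rho) - ln (pt_i rhot) - ln (pt_f rhot).
exact: (@ln4 _ _ _ _ _ Q1 Q2 Q3 Q4).
have hZi := @partZ_gt0 _ _ beta Ui Ei l hUi.
have hZf := @partZ_gt0 _ _ beta Uf Ef l hUf.
have F : beta * (dE - dF) = beta * Ef k - beta * Ei l + ln (partZ beta Uf Ef) - ln (partZ beta Ui Ei).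
exact: (@dF_eq2 _ beta (Ei l) (Ef k) _ _ hb hZi hZf).
exact: (fin K M1 M2 M3 M4 Lgi Lgf F).
Qed.
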